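(* Let $\|\cdot\|$ be a norm on $\mathbb{R}^d$, let $\Phi$ be a mirror map whose Bregman divergence satisfies $\frac{m}{2}\|x-y\|^2\le D_\Phi(x,y)\le\frac{M}{2}\|x-y\|^2$ for constants $0<m\le M$, let $f_t$ be a convex function and $x_{t-1}$ a point. For each $l$ with $K_l=\{x: f_t(x)\le l\}$ nonempty, let $x(l)=\Pi^\Phi_{K_l}(x_{t-1})$. Then the function $g(l)=\|x(l)-x_{t-1}\|$ is continuous in $l$.
   Context: For a convex function $\Phi$, the Bregman divergence is $D_\Phi(x,y)=\Phi(x)-\Phi(y)-\nabla\Phi(y)^T(x-y)$, and the Bregman projection of $x$ onto a convex set $K$ is $\Pi^\Phi_K(x)=\arg\min_{y\in K}D_\Phi(y,x)$. *)

(* Defs.v *)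
From HB Require Import structures.
From mathcomp Require Import all_boot all_order all_algebra.
From mathcomp Require Import all_classical all_reals all_analysis.
Set Implicit Arguments. Unset Strict Implicit. Unset Printing Implicit Defensive.
Import Order.TTheory GRing.Theory Num.Theory.
Import numFieldNormedType.Exports.
Local Open Scope classical_set_scope.
Local Open Scope ring_scope.

Definition is_norm (R : realType) (d : nat) (N : 'rV[R]_d -> R) : Prop :=
  [/\ (forall x, 0 <= N x),
      (forall x, N x = 0 -> x = 0),
      (forall (a : R) x, N (a *: x) = `|a| * N x) &
      (forall x y, N (x + y) <= N x + N y)].

Definition convex_fun (R : realType) (d : nat) (f : 'rV[R]_d -> R) : Prop :=
  forall (x y : 'rV[R]_d) (t : R), 0 <= t -> t <= 1 ->
    f (t *: x + (1 - t) *: y) <= t * f x + (1 - t) * f y.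

(* Bregman divergence D_Phi(x,y) = Phi x - Phi y - <grad Phi(y), x - y>;
   the last term is the directional derivative of Phi at y along x - y. *)
Definition bregman (R : realType) (d : nat) (Phi : 'rV[R]_d -> R)
    (x y : 'rV[R]_d) : R :=
  Phi x - Phi y - 'D_(x - y) Phi y.

Definition is_bregman_proj (R : realType) (d : nat) (Phi : 'rV[R]_d -> R)
    (K : set 'rV[R]_d) (x p : 'rV[R]_d) : Prop :=
  K p /\ forall y, K y -> bregman Phi p x <= bregman Phi y x.

(* The Bregman projection Pi^Phi_K(x) (a chosen minimizer; unique when it exists
   under the hypotheses of the theorem). *)
Definition bregman_proj (R : realType) (d : nat) (Phi : 'rV[R]_d -> R)
    (K : set 'rV[R]_d) (x : 'rV[R]_d) : 'rV[R]_d :=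
  xget 0 [set p | is_bregman_proj Phi K x p].

Definition sublevel (R : realType) (d : nat) (f : 'rV[R]_d -> R) (l : R)
  : set 'rV[R]_d := [set x | f x <= l].

(* Main.v *)
Require Import Defs.
From HB Require Import structures.
From mathcomp Require Import all_boot all_order all_algebra.
From mathcomp Require Import all_classical all_reals all_analysis.
Import Order.TTheory GRing.Theory Num.Theory.
Import numFieldNormedType.Exports.
Local Open Scope classical_set_scope.
Local Open Scope ring_scope.
From mathcomp Require Import ring lra.
Lemma coord_le {R : realType} {d : nat} (x : 'rV[R]_d) i : `|x 0 i| <= `|x|.
Proof.
have /mapP[j Hj ->] : `|x 0 i| \in [seq `|x k.1 k.2| | k : 'I_1 * 'I_d].
  by apply/mapP; exists (ord0, i) => //=; rewrite mem_enum.
by rewrite (_ : `|x| = mx_norm x) // mx_normrE; apply/bigmax_geP; right => /=; exists j.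
Qed.

Lemma norm_sum {R : realType} {d : nat} {N : 'rV[R]_d -> R} n (F : 'I_n -> 'rV[R]_d) :
  is_norm N -> N (\sum_(i < n) F i) <= \sum_(i < n) N (F i).
Proof.
move=> [N0 Ndef NZ ND]; elim: n F => [|n IH] F.
  by rewrite !big_ord0 -(scale0r (0 : 'rV[R]_d)) NZ normr0 mul0r.
rewrite !big_ord_recr /=. set s := \sum_(i < n) F _. have h := ND s (F ord_max). apply: le_trans h _; rewrite lerD2r; exact: IH.
Qed.

Lemma norm_upper {R : realType} {d : nat} {N : 'rV[R]_d -> R} :
  is_norm N -> exists2 C : R, 0 < C & forall x, N x <= C * `|x|.
Proof.
move=> hN; have hN' := hN; case: hN' => [N0 Ndef NZ ND].
exists (\sum_(i < d) N (delta_mx 0 i) + 1).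
  by rewrite ltr_wpDl // sumr_ge0.
move=> x; rewrite {1}(row_sum_delta x).
have h := @norm_sum _ _ N _ (fun j => x 0 j *: delta_mx 0 j) hN; apply: le_trans h _.
rewrite mulrDl mul1r ler_wpDr // mulr_suml; apply: ler_sum => i _.
by rewrite NZ mulrC ler_wpM2l // coord_le.
Qed.
Lemma loc_lip_cont {R : realType} {V : normedModType R} {f : V -> R} {x : V} {C : R} :
  0 < C -> (\forall y \near x, `|f x - f y| <= C * `|x - y|) -> {for x, continuous f}.
Proof.
move=> C0 H; apply/cvgrPdist_le => e e0.
have : \forall y \near x, `|x - y| < e / C.
  exact: (nbhs_ball_norm x (PosNum (divr_gt0 e0 C0))).
move=> H2; near=> y.
have h1 : `|f x - f y| <= C * `|x - y| by near: y.
have h2 : `|x - y| < e / C by near: y.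
apply: le_trans h1 _; rewrite -ler_pdivlMl //.
by rewrite mulrC ltW.
Unshelve. all: by end_near. Qed.

Lemma rV_bounded_by (R : realType) d (A : set 'rV[R]_d) (B : R) :
  (forall x, A x -> `|x| <= B) -> bounded_set A.
Proof.
move=> H; exists B; split; first by rewrite num_real.
move=> M BM x Ax /=; apply: le_trans (H x Ax) _; exact: ltW.
Qed.

Lemma normN_eq {R : realType} {d : nat} {N : 'rV[R]_d -> R} x :
  is_norm N -> N (- x) = N x.
Proof. by move=> [_ _ NZ _]; rewrite -scaleN1r NZ normrN1 mul1r. Qed.

Lemma norm_cont {R : realType} {d : nat} {N : 'rV[R]_d -> R} :
  is_norm N -> continuous N.
Proof.
move=> hN; have [C C0 HC] := norm_upper hN.
have hN' := hN; case: hN' => [N0 Ndef NZ ND].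
move=> x; apply: (loc_lip_cont C0); near=> y.
apply: le_trans (HC (x - y)); rewrite ler_norml; apply/andP; split.
- have h := ND (y - x) x; rewrite subrK -opprB normN_eq // in h.
  lra.
- have h := ND (x - y) y; rewrite subrK in h.
  lra.
Unshelve. all: by end_near. Qed.

Lemma norm_lower {R : realType} {d : nat} {N : 'rV[R]_d -> R} :
  is_norm N -> exists2 c : R, 0 < c & forall x, c * `|x| <= N x.
Proof.
move=> hN; have hN' := hN; case: hN' => [N0 Ndef NZ ND].
pose S := [set x : 'rV[R]_d | `|x| = 1].
have key : forall x : 'rV[R]_d, x != 0 -> S (`|x|^-1 *: x).
  by move=> x x0; rewrite /S /= normfZV.
have [[y Sy]|S0] := pselect (S !=set0); last first.
  exists 1 => // x; case: (eqVneq x 0) => [->|x0]; first by rewrite normr0 mulr0 N0.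
  by exfalso; apply: S0; exists (`|x|^-1 *: x); exact: key.
have cS : compact S.
  apply: bounded_closed_compact.
    by apply: (@rV_bounded_by _ _ _ 1) => x ->.
  apply: (@preimage_closed _ _ (fun x : 'rV[R]_d => `|x|) [set r | r = 1]).
    by move=> x _; exact: norm_continuous.
  exact: closed_eq.
have [c /set_mem Sc Hc] := EVT_min_rV (ex_intro _ y Sy) cS
   (continuous_subspaceT (norm_cont hN)).
have c0 : c != 0 by apply/eqP => c0; move: Sc; rewrite /S /= c0 normr0 => /eqP; rewrite eq_sym oner_eq0.
exists (N c).
  rewrite lt_def N0 andbT; apply/eqP => /Ndef; exact/eqP.
move=> x; case: (eqVneq x 0) => [->|x0]; first by rewrite normr0 mulr0 N0.
have := Hc _ (mem_set (key _ x0)); rewrite NZ ger0_norm ?invr_ge0 //.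
by rewrite ler_pdivlMl ?normr_gt0 // mulrC.
Qed.
Definition vtx {R : realType} {d : nat} (s : {ffun 'I_d -> bool}) : 'rV[R]_d :=
  \row_i (if s i then 1 else -1).

Lemma convex_local_bound {R : realType} {d : nat} {f : 'rV[R]_d -> R} x :
  convex_fun f -> exists U, forall y, `|y| <= 1 -> f (x + y) <= U.
Proof.
move=> cf.
pose U := \sum_(s : {ffun 'I_d -> bool}) `|f (x + vtx s)|.
exists U.
suff P : forall k (y : 'rV[R]_d), (forall i : 'I_d, (i < k)%N -> `|y 0 i| <= 1) ->
    (forall i : 'I_d, (k <= i)%N -> y 0 i = 1 \/ y 0 i = -1) -> f (x + y) <= U.
  move=> y y1; apply: (P d) => i hi; last by move: (ltn_ord i); rewrite ltnNge hi.
  exact: le_trans (coord_le y i) y1.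
elim=> [|k IH] y H1 H2.
  pose s := [ffun i => y 0 i == 1].
  have -> : y = vtx s.
    apply/matrixP => a b; rewrite !mxE ffunE (ord1 a).
    by case: (H2 b erefl) => ->; [rewrite eqxx | case: eqP].
  have h := ler_norm (f (x + vtx s)).
  have h2 : `|f (x + vtx s)| <= U.
    rewrite /U (bigD1 s) //= ler_wpDr //; exact: sumr_ge0.
  lra.
case: (ltnP k d) => kd; last first.
  apply: IH => i hi; first by apply: H1; exact: ltnW.
  by move: (ltn_ord i); rewrite ltnNge (leq_trans kd hi).
pose i0 := Ordinal kd.
pose y1 : 'rV[R]_d := \row_i (if i == i0 then 1 else y 0 i).
pose y2 : 'rV[R]_d := \row_i (if i == i0 then -1 else y 0 i).
pose t := (1 + y 0 i0) / 2.
have hy0 : `|y 0 i0| <= 1 by apply: H1.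
move: hy0; rewrite ler_norml => /andP[ya yb].
have t0 : 0 <= t by rewrite /t; lra.
have t1 : t <= 1 by rewrite /t; lra.
have -> : x + y = t *: (x + y1) + (1 - t) *: (x + y2).
  apply/matrixP => a b; rewrite !mxE (ord1 a).
  by case: eqP => [->|_]; rewrite /t; field.
have hyp1 : forall i : 'I_d, (i < k)%N -> `|y1 0 i| <= 1.
  move=> i hi; rewrite mxE; case: eqP => [_|_]; first by rewrite normr1.
  by apply: H1; exact: ltnW.
have hyp2 : forall i : 'I_d, (k <= i)%N -> y1 0 i = 1 \/ y1 0 i = -1.
  move=> i hi; rewrite mxE; case: eqP => [_|ne]; first by left.
  apply: H2; rewrite ltn_neqAle hi andbT; apply/eqP => ki; apply: ne.
  by apply: val_inj => /=.
have hyp1' : forall i : 'I_d, (i < k)%N -> `|y2 0 i| <= 1.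
  move=> i hi; rewrite mxE; case: eqP => [_|_]; first by rewrite normrN normr1.
  by apply: H1; exact: ltnW.
have hyp2' : forall i : 'I_d, (k <= i)%N -> y2 0 i = 1 \/ y2 0 i = -1.
  move=> i hi; rewrite mxE; case: eqP => [_|ne]; first by right.
  apply: H2; rewrite ltn_neqAle hi andbT; apply/eqP => ki; apply: ne.
  by apply: val_inj => /=.
have h := cf (x + y1) (x + y2) t t0 t1.
have h1 := IH _ hyp1 hyp2; have h2 := IH _ hyp1' hyp2'.
have h3 : t * f (x + y1) <= t * U by rewrite ler_wpM2l.
have h4 : (1 - t) * f (x + y2) <= (1 - t) * U by rewrite ler_wpM2l // subr_ge0.
lra.
Qed.

Lemma convex_continuous {R : realType} {d : nat} (f : 'rV[R]_d -> R) :
  convex_fun f -> continuous f.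
Proof.
move=> cf x; have [U HU] := convex_local_bound (x : 'rV[R]_d) cf.
have fxU : f x <= U by have := HU 0; rewrite normr0 addr0; apply; exact: ler01.
have C0 : 0 < U - f x + 1 by lra.
apply: (loc_lip_cont C0).
have : \forall z \near x, `|x - z| < 1 by exact: (nbhs_ball_norm x (PosNum ltr01)).
apply: filterS => z hz.
set y := z - x; set r := `|x - z|.
have ry : r = `|y| by rewrite /r /y distrC.
have r1 : r <= 1 by exact: ltW.
have [r0|r0] := eqVneq r 0.
  have -> : z = x by apply/eqP; rewrite -subr_eq0 -normr_eq0 -ry r0.
  by rewrite subrr normr0 r0 mulr0.
have rp : 0 < r by rewrite lt_def r0 normr_ge0.
have y0 : y != 0 by rewrite -normr_eq0 -ry.
have hv : `|r^-1 *: y| <= 1 by rewrite ry normfZV.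
have hv' : `|- (r^-1 *: y)| <= 1 by rewrite normrN.
have e1 : z = r *: (x + r^-1 *: y) + (1 - r) *: x.
  by apply/matrixP => ? ?; rewrite /y !mxE; field; rewrite (gt_eqF rp).
have e2 : x = (1 + r)^-1 *: z + (1 - (1 + r)^-1) *: (x + - (r^-1 *: y)).
  have r1' : 1 + r != 0 by rewrite gt_eqF // addr_gt0.
  by apply/matrixP => ? ?; rewrite /y !mxE; field; rewrite (gt_eqF rp) (negbTE r1').
have h1 := cf (x + r^-1 *: y) x r (ltW rp) r1.
rewrite -e1 in h1.
have t0 : 0 <= (1 + r)^-1 by rewrite invr_ge0; lra.
have t1 : (1 + r)^-1 <= 1 by rewrite invf_le1; lra.
have h2 := cf z (x + - (r^-1 *: y)) _ t0 t1.
rewrite -e2 in h2.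
have A := HU _ hv; have B := HU _ hv'.
have A' : r * f (x + r^-1 *: y) <= r * U by rewrite ler_wpM2l // ltW.
have B' : (1 - (1 + r)^-1) * f (x + - (r^-1 *: y)) <= (1 - (1 + r)^-1) * U.
  by rewrite ler_wpM2l // subr_ge0.
have h3 : (1 + r) * f x <= f z + r * U.
  have -> : f z + r * U = (1 + r) * ((1 + r)^-1 * f z + (1 - (1 + r)^-1) * U).
    field; lra.
  rewrite ler_wpM2l //; first lra.
  lra.
rewrite ler_norml; apply/andP; split; nra.
Qed.
Lemma within_cont_eps {R : realType} (A : set R) (g : R -> R) :
  (forall l0, A l0 -> forall e, 0 < e ->
     exists2 dl, 0 < dl & forall l, A l -> `|l - l0| < dl -> `|g l - g l0| <= e) ->
  {within A, continuous g}.
Proof.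
move=> H; rewrite continuous_subspace_in => l0 /set_mem Al0.
apply/cvgrPdist_le => e e0.
rewrite -nbhs_subspace_in //.
have [dl dl0 Hd] := H l0 Al0 e e0.
exists dl => //= l hl Al; rewrite distrC; apply: Hd => //.
by rewrite distrC.
Qed.

Lemma fip_R {R : realType} {T : topologicalType} (S : set T) (A : R -> set T) :
  compact S -> (forall dl, 0 < dl -> A dl !=set0) ->
  (forall dl, 0 < dl -> closed (A dl)) ->
  (forall dl dl', 0 < dl -> dl <= dl' -> A dl `<=` A dl') -> A 1 `<=` S ->
  exists z, forall dl, 0 < dl -> A dl z.
Proof.
move=> cS ne cl mono A1S.
pose F := filter_from [set dl : R | 0 < dl] A.
have FF : Filter F.
  apply: filter_from_filter; first by exists 1 => /=.
  move=> i j /= i0 j0; exists (Num.min i j) => /=; first by rewrite lt_min i0.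
  move=> z Az; split; apply: (mono (Num.min i j)) Az; rewrite ?lt_min ?i0 ?j0 //.
    by rewrite ge_min lexx.
  by rewrite ge_min lexx orbT.
have PF : ProperFilter F by apply: filter_from_proper.
have FS : F S by exists 1 => //=.
have [z [_ cz]] := cS F PF FS.
exists z => dl dl0; apply: (cl dl dl0) => B Bz.
by apply: cz => //; exists dl.
Qed.
Lemma mid_alg {R : realType} {K a b1 b2 b3 P1 P2 P3 P4 : R} :
  K / 2 <= P1 - P3 - a -> K / 2 <= P2 - P3 - - a -> b1 + b2 = 2 * b3 ->
  K + 2 * (P3 - P4 - b3) <= P1 - P4 - b1 + (P2 - P4 - b2).
Proof. move=> h1 h2 h3; lra. Qed.

Lemma conv_alg {R : realType} {t Pa Pb Pc P0 La Lb : R} :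
  Pc <= t * Pa + (1 - t) * Pb ->
  Pc - P0 - (t * La + (1 - t) * Lb) <= t * (Pa - P0 - La) + (1 - t) * (Pb - P0 - Lb).
Proof. move=> h; have -> : P0 = t * P0 + (1 - t) * P0 by ring. lra. Qed.

Lemma subconv_alg {R : realType} {t fa fb fc l1 l2 : R} :
  0 <= t -> t <= 1 -> fa <= l1 -> fb <= l2 -> fc <= t * fa + (1 - t) * fb ->
  fc <= t * l1 + (1 - t) * l2.
Proof.
move=> t0 t1 h1 h2 h; apply: le_trans h _; apply: lerD; apply: ler_wpM2l => //.
by rewrite subr_ge0.
Qed.

Lemma bound_alg {R : realType} {c m n a g : R} : 0 < c -> 0 < m -> 0 <= a ->
  c * a <= n -> m / 2 * n ^+ 2 <= g -> a <= 1 + g / (m / 2 * c ^+ 2).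
Proof.
move=> c0 m0 a0 h1 h2.
have ca0 : 0 <= c * a by rewrite mulr_ge0 // ltW.
have h3 : (c * a) ^+ 2 <= n ^+ 2 by rewrite !expr2 ler_pM.
have k0 : 0 < m / 2 * c ^+ 2 by rewrite mulr_gt0 ?divr_gt0 ?exprn_gt0.
have h4 : a ^+ 2 <= g / (m / 2 * c ^+ 2).
  rewrite ler_pdivlMr // (le_trans _ h2) //.
  have -> : a ^+ 2 * (m / 2 * c ^+ 2) = m / 2 * (c * a) ^+ 2 by ring.
  by rewrite ler_wpM2l // divr_ge0 // ltW.
have h5 : a <= 1 + a ^+ 2.
  case: (leP a 1) => ha; first by rewrite (le_trans ha) // lerDl sqr_ge0.
  rewrite (le_trans _ (ler_wpDl ler01 (lexx _))) // expr2 ler_peMr //; exact: ltW.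
lra.
Qed.

Lemma le_eps {R : realType} {a b : R} : (forall dl, 0 < dl -> a <= b + dl) -> a <= b.
Proof.
move=> H; case: (leP a b) => // ab.
have h := H ((a - b) / 2) ltac:(rewrite divr_gt0 // subr_gt0).
lra.
Qed.

Lemma pi_alg {R : realType} {K Gz Gy vl : R} : K + 2 * Gz <= Gy + vl -> vl <= Gz -> K <= Gy - vl.
Proof. move=> h1 h2; lra. Qed.

Lemma left_alg {R : realType} {t a b vl Bv e : R} : 0 <= t ->
  vl <= t * a + (1 - t) * b -> a - b <= Bv -> t * Bv <= e -> vl - b <= e.
Proof.
move=> t0 h1 h2 h3.
have h4 : t * (a - b) <= t * Bv by rewrite ler_wpM2l.
have e1 : t * a + (1 - t) * b - b = t * (a - b) by ring.
have h5 : vl - b <= t * a + (1 - t) * b - b by lra.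
rewrite e1 in h5; lra.
Qed.

Lemma t_alg {R : realType} {l l0 l1 Bv e : R} : l1 < l0 -> 0 < Bv ->
  l0 - l < e * (l0 - l1) / Bv -> (l0 - l) / (l0 - l1) * Bv <= e.
Proof.
move=> h1 h2 h3.
have d0 : 0 < l0 - l1 by rewrite subr_gt0.
rewrite mulrAC ler_pdivrMr // -ler_pdivlMr //; exact: ltW.
Qed.

Lemma sq_alg {R : realType} {x e k : R} : 0 <= x -> 0 < e -> 0 < k ->
  k * x ^+ 2 <= k * e ^+ 2 -> x <= e.
Proof.
move=> x0 e0 k0 h; rewrite ler_pM2l // in h.
by rewrite -(@ler_pXn2r _ 2) // nnegrE // ltW.
Qed.

Lemma t_bounds {R : realType} {l l0 l1 : R} : l1 <= l -> l <= l0 -> l1 < l0 ->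
  0 <= (l0 - l) / (l0 - l1) /\ (l0 - l) / (l0 - l1) <= 1.
Proof.
move=> h1 h2 h3; have d0 : 0 < l0 - l1 by rewrite subr_gt0.
split; first by rewrite divr_ge0 // ?subr_ge0 // ltW.
by rewrite ler_pdivrMr // mul1r; lra.
Qed.

Lemma t_comb {R : realType} {l l0 l1 : R} : l1 < l0 ->
  (l0 - l) / (l0 - l1) * l1 + (1 - (l0 - l) / (l0 - l1)) * l0 = l.
Proof.
move=> h; have d0 : l0 - l1 != 0 by rewrite gt_eqF // subr_gt0.
by field.
Qed.

Lemma abs_alg {R : realType} {l l0 dl : R} : `|l - l0| < dl -> l < l0 + dl /\ l0 - dl < l.
Proof. rewrite ltr_norml => /andP[h1 h2]; split; lra. Qed.

Lemma lt_alg {R : realType} {l l0 x : R} : l0 - x < l -> l0 - l < x.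
Proof. move=> h; lra. Qed.

Lemma le_sub_alg {R : realType} {a b e : R} : 0 < e -> a <= b - e -> a <= b.
Proof. move=> h1 h2; lra. Qed.

Lemma contr_alg {R : realType} {a b e : R} : 0 < e -> a <= b -> b <= a - e -> False.
Proof. move=> h1 h2 h3; lra. Qed.

Lemma lt_sub_alg {R : realType} {a b e : R} : e < a - b -> b <= a - e.
Proof. move=> h; lra. Qed.

Theorem lemma4 (R : realType) (d : nat) (N : 'rV[R]_d -> R)
    (Phi : 'rV[R]_d -> R) (m M : R) (f : 'rV[R]_d -> R) (x0 : 'rV[R]_d) :
  is_norm N ->
  (forall x : 'rV[R]_d, differentiable Phi x) ->
  convex_fun Phi ->
  0 < m -> m <= M ->
  (forall x y : 'rV[R]_d,
      m / 2 * N (x - y) ^+ 2 <= bregman Phi x y /\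
      bregman Phi x y <= M / 2 * N (x - y) ^+ 2) ->
  convex_fun f ->
  {within [set l : R | sublevel f l !=set0],
    continuous (fun l : R => N (bregman_proj Phi (sublevel f l) x0 - x0))}.
Proof.
move=> hN hdiff cPhi m0 mM hB cf.
have hN' := hN; case: hN' => [N0 Ndef NZ ND].
have [c c0 Hc] := norm_lower hN.
have fcont := convex_continuous _ cf.
have DE : forall p v, 'D_v Phi p = 'd Phi p v by move=> p v; exact: deriveE.
pose G y := bregman Phi y x0.
have GE : forall y, G y = Phi y - Phi x0 - 'd Phi x0 (y - x0).
  by move=> y; rewrite /G /bregman DE.
have Gcont : continuous G.
  have -> : G = (fun y => Phi y - Phi x0 - ('d Phi x0 y - 'd Phi x0 x0)).
    by apply/funext => y; rewrite GE linearB.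
  move=> y.
  have c1 : Phi @ y --> Phi y := differentiable_continuous (hdiff y).
  have c3 : 'd Phi x0 @ y --> 'd Phi x0 y.
    exact: (diff_continuous (hdiff x0)).
  exact: (cvgB (cvgB c1 (cvg_cst _)) (cvgB c3 (cvg_cst _))).
have NrevT : forall a b, `|N a - N b| <= N (a - b).
  move=> a b; rewrite ler_norml; apply/andP; split.
  - have h := ND (b - a) a; rewrite subrK -opprB normN_eq // in h.
    lra.
  - have h := ND (a - b) b; rewrite subrK in h.
    lra.
have Nhalf : forall v, N (2^-1 *: v) = 2^-1 * N v.
  by move=> v; rewrite NZ ger0_norm // invr_ge0.
have Hmid : forall p q, m / 4 * N (p - q) ^+ 2 + 2 * G (2^-1 *: (p + q)) <= G p + G q.
  move=> p q; set z := 2^-1 *: (p + q).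
  have e1 : p - z = 2^-1 *: (p - q).
    by apply/matrixP => ? ?; rewrite /z !mxE; field.
  have e2 : q - z = - (2^-1 *: (p - q)).
    by apply/matrixP => ? ?; rewrite /z !mxE; field.
  have e3 : (p - x0) + (q - x0) = 2 *: (z - x0).
    by apply/matrixP => ? ?; rewrite /z !mxE; field.
  have h1 := (hB p z).1; have h2 := (hB q z).1.
  rewrite /bregman !DE e2 linearN /= in h1 h2.
  rewrite e1 in h1.
  rewrite normN_eq // Nhalf in h2; rewrite Nhalf in h1.
  have h3 : 'd Phi x0 (p - x0) + 'd Phi x0 (q - x0) = 2 * 'd Phi x0 (z - x0).
    by rewrite -linearD e3 linearZ.
  rewrite !GE.
  have h4 : m / 2 * (2^-1 * N (p - q)) ^+ 2 = (m / 4 * N (p - q) ^+ 2) / 2.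
    by field.
  rewrite h4 in h1 h2.
  exact: (mid_alg h1 h2 h3).
have Gconv : forall a b t, 0 <= t -> t <= 1 ->
    G (t *: a + (1 - t) *: b) <= t * G a + (1 - t) * G b.
  move=> a b t t0 t1; rewrite !GE.
  have e : t *: a + (1 - t) *: b - x0 = t *: (a - x0) + (1 - t) *: (b - x0).
    by apply/matrixP => ? ?; rewrite !mxE; ring.
  rewrite e linearD !linearZ /=.
  have h := cPhi a b t t0 t1.
  exact: (conv_alg h).
have Gge : forall y, m / 2 * N (y - x0) ^+ 2 <= G y by move=> y; exact: (hB y x0).1.
have subconv : forall l1 l2 a b t, 0 <= t -> t <= 1 -> f a <= l1 -> f b <= l2 ->
    f (t *: a + (1 - t) *: b) <= t * l1 + (1 - t) * l2.
  move=> l1 l2 a b t t0 t1 ha hb; have h := cf a b t t0 t1.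
  exact: (subconv_alg t0 t1 ha hb h).
have closedK : forall l, closed (sublevel f l).
  move=> l; apply: (@preimage_closed _ _ f [set r | r <= l]).
    by move=> x _; exact: fcont.
  exact: closed_le.
have exproj : forall l, sublevel f l !=set0 ->
    is_bregman_proj Phi (sublevel f l) x0 (bregman_proj Phi (sublevel f l) x0).
  move=> l [y0 Ky0]; apply: xgetPex.
  pose S := sublevel f l `&` [set y | G y <= G y0].
  have cS : compact S.
    apply: bounded_closed_compact.
      apply: (@rV_bounded_by _ _ _ (`|x0| + (1 + G y0 / (m / 2 * c ^+ 2)))) => y [_ Gy].
      have hy : `|y| <= `|x0| + `|y - x0|.
        by rewrite -{1}(subrKC x0 y) ler_normD.
      apply: (le_trans hy); rewrite lerD2l.
      apply: (bound_alg c0 m0 (normr_ge0 _) (Hc _)).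
      exact: (le_trans (Gge y) Gy).
    apply: closedI; first exact: closedK.
    apply: (@preimage_closed _ _ G [set r | r <= G y0]).
      by move=> x _; exact: Gcont.
    exact: closed_le.
  have S0 : S !=set0 by exists y0; split => //=.
  have [q /set_mem Sq Hq] := EVT_min_rV S0 cS (continuous_subspaceT Gcont).
  exists q; split; first exact: Sq.1.
  move=> y Ky; have [Gy|Gy] := leP (G y) (G y0).
    by apply: Hq; apply: mem_set.
  exact: (le_trans Sq.2 (ltW Gy)).
have compG : forall g, compact [set y | G y <= g].
  move=> g; apply: bounded_closed_compact.
    apply: (@rV_bounded_by _ _ _ (`|x0| + (1 + g / (m / 2 * c ^+ 2)))) => y Gy.
    have hy : `|y| <= `|x0| + `|y - x0|.
      by rewrite -{1}(subrKC x0 y) ler_normD.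
    apply: (le_trans hy); rewrite lerD2l.
    apply: (bound_alg c0 m0 (normr_ge0 _) (Hc _)).
    exact: (le_trans (Gge y) Gy).
  apply: (@preimage_closed _ _ G [set r | r <= g]).
    by move=> x _; exact: Gcont.
  exact: closed_le.
pose p l := bregman_proj Phi (sublevel f l) x0.
pose v l := G (p l).
have PI : forall l y, sublevel f l !=set0 -> f y <= l ->
    m / 4 * N (y - p l) ^+ 2 <= G y - v l.
  move=> l y ne fy; have [Kp Hp] := exproj l ne.
  have Kz : f (2^-1 *: (y + p l)) <= l.
    have e : 2^-1 *: (y + p l) = 2^-1 *: y + (1 - 2^-1) *: p l.
      by apply/matrixP => ? ?; rewrite !mxE; field.
    have t0 : (0 : R) <= 2^-1 by rewrite invr_ge0.
    have t1 : (2^-1 : R) <= 1 by rewrite invf_le1 // ler1n.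
    rewrite e; have h := subconv l l y (p l) 2^-1 t0 t1 fy Kp.
    by rewrite -mulrDl subrKC mul1r in h.
  have h1 := Hp _ Kz.
  have h2 := Hmid y (p l).
  exact: (pi_alg h2 h1).
have Dmono : forall l l', sublevel f l !=set0 -> l <= l' -> sublevel f l' !=set0.
  by move=> l l' [y hy] ll'; exists y; rewrite /sublevel /= (le_trans hy).
apply: within_cont_eps => l0 Dl0 e e0.
pose eta := m / 4 * e ^+ 2.
have eta0 : 0 < eta by rewrite /eta mulr_gt0 ?divr_gt0 ?exprn_gt0.
have [Kp0 Hp0] := exproj l0 Dl0.
have Rpart : exists2 dR, 0 < dR & forall l, l0 <= l -> l < l0 + dR -> v l0 - v l <= eta.
  case: (pselect (exists2 dR, 0 < dR & forall l, l0 <= l -> l < l0 + dR -> v l0 - v l <= eta)) => // nH.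
  exfalso.
  have ex : forall dl, 0 < dl -> exists l, [/\ l0 <= l, l < l0 + dl & eta < v l0 - v l].
    move=> dl dl0; apply: contra_notP nH => nl; exists dl => // l h1 h2.
    rewrite leNgt; apply/negP => h3; apply: nl; exists l; split => //.
  pose A dl := sublevel f (l0 + dl) `&` [set y | G y <= v l0 - eta].
  have [z Hz] : exists z, forall dl, 0 < dl -> A dl z.
    apply: (@fip_R _ _ [set y | G y <= v l0]).
    - exact: compG.
    - move=> dl dl0; have [l [h1 h2 h3]] := ex dl dl0.
      have Dl := Dmono _ _ Dl0 h1.
      exists (p l); split.
        exact: (le_trans (exproj l Dl).1 (ltW h2)).
      exact: (lt_sub_alg h3).
    - move=> dl dl0; apply: closedI; first exact: closedK.
      apply: (@preimage_closed _ _ G [set r | r <= v l0 - eta]).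
        by move=> x _; exact: Gcont.
      exact: closed_le.
    - move=> dl dl' dl0 dd y [h1 h2]; split => //.
      by apply: (le_trans h1); rewrite lerD2l.
    - by move=> y [_ h]; exact: (le_sub_alg eta0 h).
  have fz : f z <= l0 by apply: le_eps => dl dl0; exact: (Hz dl dl0).1.
  have h := Hp0 z fz.
  have h' := (Hz 1 ltr01).2.
  exact: (contr_alg eta0 h h').
have Lpart : exists2 dL, 0 < dL & forall l, sublevel f l !=set0 -> l < l0 -> l0 - dL < l ->
    v l - v l0 <= eta.
  case: (pselect (exists l1, sublevel f l1 !=set0 /\ l1 < l0)) => [[l1 [Dl1 l10]]|nl]; last first.
    by exists 1 => // l Dl ll0; exfalso; apply: nl; exists l; split.
  pose Bv := `|v l1 - v l0| + 1.
  have Bv0 : 0 < Bv by rewrite /Bv ltr_wpDl.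
  have d0 : 0 < l0 - l1 by rewrite subr_gt0.
  exists (Num.min (l0 - l1) (eta * (l0 - l1) / Bv)).
    by rewrite lt_min d0 /= !mulr_gt0 ?invr_gt0.
  move=> l Dl ll0 hl; move: (lt_alg hl); rewrite lt_min => /andP[ha hb].
  have l1l : l1 <= l by move: ha; rewrite ltrBlDr addrC -ltrBlDr opprB addrC subrK => /ltW.
  have [t0 t1] := t_bounds l1l (ltW ll0) l10.
  set t := (l0 - l) / (l0 - l1) in t0 t1 hb.
  have fw : f (t *: p l1 + (1 - t) *: p l0) <= l.
    have h := subconv l1 l0 (p l1) (p l0) t t0 t1 (exproj l1 Dl1).1 Kp0.
    by rewrite /t t_comb // in h.
  have vlw := (exproj l Dl).2 _ fw.
  have Gw := Gconv (p l1) (p l0) t t0 t1.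
  have ab : v l1 - v l0 <= Bv.
    by apply: (le_trans (ler_norm _)); rewrite /Bv lerDl.
  exact: (left_alg t0 (le_trans vlw Gw) ab (t_alg l10 Bv0 hb)).
have [dR dR0 HR] := Rpart; have [dL dL0 HL] := Lpart.
exists (Num.min dR dL); first by rewrite lt_min dR0.
move=> l Dl; rewrite lt_min => /andP[hR hL].
have [hR1 _] := abs_alg hR; have [_ hL2] := abs_alg hL.
have key : N (p l - p l0) <= e.
  apply: (sq_alg (N0 _) e0 (_ : 0 < m / 4)); first by rewrite divr_gt0.
  case: (leP l0 l) => ll.
    have h := PI l (p l0) Dl (le_trans Kp0 ll).
    rewrite -opprB normN_eq // in h.
    exact: (le_trans h (HR l ll hR1)).
  have h := PI l0 (p l) Dl0 (le_trans (exproj l Dl).1 (ltW ll)).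
  exact: (le_trans h (HL l Dl ll hL2)).
apply: (le_trans (NrevT _ _)).
have -> : bregman_proj Phi (sublevel f l) x0 - x0 - (bregman_proj Phi (sublevel f l0) x0 - x0)
    = p l - p l0.
  by apply/matrixP => ? ?; rewrite !mxE; ring.
exact: key.
Qed.
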